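(* Let $m\neq 0$ and $k$ be real constants, let $\mathbf{q}_0,\mathbf{p}_0\in\mathbb{R}^3$ with $\mathbf{q}_0\neq 0$, and let $h_0>0$. Run the numerical scheme described in the context and assume that all quantities it produces are well defined for every $n\ge 0$ (all denominators nonzero). Then for every $n\ge 0$, with $q_n=|\mathbf q_n|$ and $S_n=\dfrac{h_n\,\mathbf q_n\cdot\mathbf p_n}{m\,q_n}$, $$\mathbf r_n=\mathbf q_n+\frac{h_n}{2m}\Big(\frac{S_n}{q_n+\sqrt{q_n^2+S_n^2}}-1\Big)\mathbf p_n .$$ (That is, the initialization formula expressing $\mathbf r_0$ through $\mathbf q_0,\mathbf p_0,h_0$ remains valid at every step of the iteration.)
   Context: The scheme is a discretization of the Kepler problem $\dot{\mathbf p}=-k\mathbf q/|\mathbf q|^3$, $\mathbf p=m\dot{\mathbf q}$ in $\mathbb{R}^3$. For a vector $\mathbf v$ write $v=|\mathbf v|$. Initialization: put $q_0=|\mathbf q_0|$, $$S_0=\frac{h_0\,\mathbf q_0\cdot\mathbf p_0}{m\,q_0},\qquad \mathbf r_0=\mathbf q_0+\frac{h_0}{2m}\Big(\frac{S_0}{q_0+\sqrt{q_0^2+S_0^2}}-1\Big)\mathbf p_0,\qquad \mathbf r_1=\mathbf r_0+\frac{h_0\mathbf p_0}{m},$$ and let $\delta\in[0,\pi/2)$ be defined by $\cos 2\delta=\dfrac{r_0^2+\mathbf r_0\cdot\mathbf P_0}{r_0\sqrt{r_0^2+2\mathbf r_0\cdot\mathbf P_0+\mathbf P_0^2}}$, where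 $\mathbf P_0=h_0\mathbf p_0/m$ (equivalently $\cos2\delta=\mathbf r_0\cdot\mathbf r_1/(r_0r_1)$). Iteration: for $n=0,1,2,\dots$, given $\mathbf r_n,\mathbf r_{n+1},\mathbf p_n,h_n$, define $$\mathbf p_{n+1}=\mathbf p_n-\frac{k h_n\,\mathbf r_{n+1}}{r_{n+1}^2 r_n\cos\delta},\qquad h_{n+1}=\frac{h_n}{\dfrac{2r_n\cos2\delta}{r_{n+1}}-1+\dfrac{k h_n^2}{m\,r_{n+1}^2 r_n\cos\delta}},$$ $$\mathbf r_{n+2}=\mathbf r_{n+1}+\frac{h_{n+1}\mathbf p_{n+1}}{m},\qquad \mathbf q_{n+1}=\frac{r_{n+2}\mathbf r_{n+1}+r_{n+1}\mathbf r_{n+2}}{r_{n+1}+r_{n+2}} .$$ The initial $\mathbf q_0$ is the given one. *)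

(* Defs.v *)
From Stdlib Require Import Reals Lra.
Open Scope R_scope.

Definition vec3 : Type := (R * R * R)%type.

Definition vadd (u v : vec3) : vec3 :=
  let '(u1, u2, u3) := u in let '(v1, v2, v3) := v in (u1 + v1, u2 + v2, u3 + v3).
Definition vscale (a : R) (v : vec3) : vec3 :=
  let '(v1, v2, v3) := v in (a * v1, a * v2, a * v3).
Definition vdot (u v : vec3) : R :=
  let '(u1, u2, u3) := u in let '(v1, v2, v3) := v in u1 * v1 + u2 * v2 + u3 * v3.
Definition vnorm (v : vec3) : R := sqrt (vdot v v).

Definition Sfun (m : R) (q p : vec3) (h : R) : R := h * vdot q p / (m * vnorm q).

Definition rinit (m : R) (q p : vec3) (h : R) : vec3 :=
  let S := Sfun m q p h in
  vadd q (vscale (h / (2 * m) * (S / (vnorm q + sqrt (vnorm q ^ 2 + S ^ 2)) - 1)) p).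

Definition r0 (m : R) (q0 p0 : vec3) (h0 : R) : vec3 := rinit m q0 p0 h0.
Definition r1 (m : R) (q0 p0 : vec3) (h0 : R) : vec3 :=
  vadd (r0 m q0 p0 h0) (vscale (h0 / m) p0).

Definition cos2delta (m : R) (q0 p0 : vec3) (h0 : R) : R :=
  vdot (r0 m q0 p0 h0) (r1 m q0 p0 h0) / (vnorm (r0 m q0 p0 h0) * vnorm (r1 m q0 p0 h0)).
Definition delta (m : R) (q0 p0 : vec3) (h0 : R) : R := acos (cos2delta m q0 p0 h0) / 2.

(* state at step n : (r_n, r_{n+1}, p_n, h_n) *)
Record state := mkState { st_r : vec3; st_r1 : vec3; st_p : vec3; st_h : R }.

Definition hden (m k c2 cd : R) (s : state) : R :=
  2 * vnorm (st_r s) * c2 / vnorm (st_r1 s) - 1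
  + k * st_h s ^ 2 / (m * vnorm (st_r1 s) ^ 2 * vnorm (st_r s) * cd).

Definition step (m k c2 cd : R) (s : state) : state :=
  let rn := st_r s in let rn1 := st_r1 s in let pn := st_p s in let hn := st_h s in
  let p' := vadd pn (vscale (- (k * hn / (vnorm rn1 ^ 2 * vnorm rn * cd))) rn1) in
  let h' := hn / hden m k c2 cd s in
  let r'' := vadd rn1 (vscale (h' / m) p') in
  mkState rn1 r'' p' h'.

Fixpoint scheme (m k : R) (q0 p0 : vec3) (h0 : R) (n : nat) : state :=
  match n with
  | O => mkState (r0 m q0 p0 h0) (r1 m q0 p0 h0) p0 h0
  | S n' => step m k (cos2delta m q0 p0 h0) (cos (delta m q0 p0 h0))
                 (scheme m k q0 p0 h0 n')
  end.

Definition r_ (m k : R) (q0 p0 : vec3) (h0 : R) (n : nat) : vec3 :=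
  st_r (scheme m k q0 p0 h0 n).
Definition p_ (m k : R) (q0 p0 : vec3) (h0 : R) (n : nat) : vec3 :=
  st_p (scheme m k q0 p0 h0 n).
Definition h_ (m k : R) (q0 p0 : vec3) (h0 : R) (n : nat) : R :=
  st_h (scheme m k q0 p0 h0 n).

Definition q_ (m k : R) (q0 p0 : vec3) (h0 : R) (n : nat) : vec3 :=
  match n with
  | O => q0
  | S n' =>
    let a := r_ m k q0 p0 h0 (S n') in
    let b := r_ m k q0 p0 h0 (S (S n')) in
    vscale (/ (vnorm a + vnorm b)) (vadd (vscale (vnorm b) a) (vscale (vnorm a) b))
  end.

(* Main.v *)
Require Import Defs.
From Stdlib Require Import Reals.
From Stdlib Require Import Lra Psatz.
Open Scope R_scope.

Lemma b_eq Q S c : 0 < Q -> -1 < c < 1 -> S*c^2 + 2*Q*c - S = 0 ->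
  S / (Q + sqrt (Q^2 + S^2)) = c.
Proof.
  intros HQ Hc E.
  assert (H1 : 0 < 1 - c^2) by nra.
  assert (HS : S = 2*Q*c/(1-c^2)) by (field_simplify_eq; [nra | lra]).
  assert (HD : sqrt (Q^2+S^2) = Q*(1+c^2)/(1-c^2)).
  { replace (Q^2+S^2) with ((Q*(1+c^2)/(1-c^2))^2).
    - apply sqrt_pow2. apply Rmult_le_pos; [nra|]. left; apply Rinv_0_lt_compat; lra.
    - rewrite HS. field. lra. }
  rewrite HD, HS.
  assert (Q + Q*(1+c^2)/(1-c^2) = 2*Q/(1-c^2)) as ->. { field. lra. }
  field. split; lra.
Qed.

Lemma vnorm_pos v : vnorm v <> 0 -> 0 < vnorm v.
Proof. intros H. unfold vnorm in *. pose proof (sqrt_pos (vdot v v)). lra. Qed.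

Lemma key m h (A p : vec3) :
  m <> 0 -> vnorm A <> 0 -> vnorm (vadd A (vscale (h/m) p)) <> 0 ->
  let B := vadd A (vscale (h/m) p) in
  let q := vscale (/ (vnorm A + vnorm B)) (vadd (vscale (vnorm B) A) (vscale (vnorm A) B)) in
  vnorm q <> 0 -> A = rinit m q p h.
Proof.
  intros Hm HA HB B q Hq.
  unfold rinit, Sfun.
  assert (Hal : 0 < vnorm A) by (apply vnorm_pos; assumption).
  assert (Hbe : 0 < vnorm B) by (apply vnorm_pos; assumption).
  assert (HQ : 0 < vnorm q) by (apply vnorm_pos; assumption).
  set (al := vnorm A) in *. set (be := vnorm B) in *. set (Q := vnorm q) in *.
  assert (Hal2 : al^2 = vdot A A).
  { unfold al, vnorm. rewrite <- Rsqr_pow2. apply Rsqr_sqrt.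
    destruct A as [[x y] z]; simpl; nra. }
  assert (Hbe2 : be^2 = vdot B B).
  { unfold be, vnorm. rewrite <- Rsqr_pow2. apply Rsqr_sqrt.
    destruct B as [[x y] z]; simpl; nra. }
  assert (HQ2 : Q^2 = vdot q q).
  { unfold Q, vnorm. rewrite <- Rsqr_pow2. apply Rsqr_sqrt.
    destruct q as [[x y] z]; simpl; nra. }
  clearbody al be Q.
  set (a := al/(al+be)).
  set (c := 1 - 2*a).
  assert (Hc : -1 < c < 1).
  { unfold c, a. split.
    - assert (al/(al+be) < 1). { apply Rmult_lt_reg_r with (al+be); [lra|].
        field_simplify; lra. } lra.
    - assert (0 < al/(al+be)) by (apply Rdiv_lt_0_compat; lra). lra. }
  set (S := h * vdot q p / (m * Q)).
  destruct A as [[x y] z]; destruct p as [[u v] w].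
  subst B q. cbn [vadd vscale vdot] in *.
  assert (HSq : S * c^2 + 2*Q*c - S = 0).
  { assert (E : Q * (S * c^2 + 2*Q*c - S) = 0).
    { assert (QS : Q * S = h * ((/ (al + be) * (be * x + al * (x + h / m * u))) * u +
        (/ (al + be) * (be * y + al * (y + h / m * v))) * v +
        (/ (al + be) * (be * z + al * (z + h / m * w))) * w) / m).
      { unfold S. field. lra. }
      replace (Q * (S * c^2 + 2*Q*c - S)) with ((Q*S)*c^2 + 2*Q^2*c - Q*S) by ring.
      rewrite QS, HQ2. unfold c, a. field_simplify_eq; [|lra].
      transitivity (2*(al+be)*m^2*((x*x+y*y+z*z)*be^2 - al^2*((x + h / m * u) * (x + h / m * u) + (y + h / m * v) * (y + h / m * v) +
    (z + h / m * w) * (z + h / m * w)))).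
      { field. exact Hm. }
      rewrite Hal2, Hbe2. ring. }
    apply Rmult_integral in E; lra. }
  rewrite (b_eq Q S c HQ Hc HSq).
  unfold c, a. f_equal; [f_equal|]; field; lra.
Qed.

Lemma scheme_r1 m k q0 p0 h0 n :
  st_r1 (scheme m k q0 p0 h0 n) =
  vadd (st_r (scheme m k q0 p0 h0 n))
       (vscale (st_h (scheme m k q0 p0 h0 n) / m) (st_p (scheme m k q0 p0 h0 n))).
Proof. destruct n; reflexivity. Qed.

Theorem mainTheorem5 (m k : R) (q0 p0 : vec3) (h0 : R) :
  m <> 0 -> q0 <> (0, 0, 0) -> 0 < h0 ->
  (* well-definedness: all denominators of the scheme are nonzero *)
  cos (delta m q0 p0 h0) <> 0 ->
  (forall n, vnorm (r_ m k q0 p0 h0 n) <> 0) ->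
  (forall n, hden m k (cos2delta m q0 p0 h0) (cos (delta m q0 p0 h0))
               (scheme m k q0 p0 h0 n) <> 0) ->
  (forall n, vnorm (q_ m k q0 p0 h0 n) <> 0) ->
  forall n, r_ m k q0 p0 h0 n = rinit m (q_ m k q0 p0 h0 n) (p_ m k q0 p0 h0 n) (h_ m k q0 p0 h0 n).
Proof.
  intros Hm _ _ _ Hr _ Hq n.
  destruct n as [|n].
  - reflexivity.
  - pose proof (Hq (S n)) as Hqn. pose proof (Hr (S n)) as H1. pose proof (Hr (S (S n))) as H2.
    unfold q_ in *.
    assert (E : r_ m k q0 p0 h0 (S (S n)) =
      vadd (r_ m k q0 p0 h0 (S n)) (vscale (h_ m k q0 p0 h0 (S n) / m) (p_ m k q0 p0 h0 (S n)))).
    { unfold r_ at 1. change (st_r (scheme m k q0 p0 h0 (S (S n)))) with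
        (st_r1 (scheme m k q0 p0 h0 (S n))). apply scheme_r1. }
    rewrite E in *.
    apply (key m (h_ m k q0 p0 h0 (S n)) (r_ m k q0 p0 h0 (S n)) (p_ m k q0 p0 h0 (S n))); assumption.
Qed.
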